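(* Let $L_5=\{-3,-2,-1,0,1\}$ with its natural linear order. Define the games $\star=\{-1\mid -3\}$, and for any game $G$: $\mathsf{M}(G)=\{1\mid G\}$, $\mathsf{P}(G)=\{G\mid -2\}$, $\mathsf{P}_\star(G)=\{G\mid \star\}$. For $n\in\mathbb{N}$ let $\mathsf{P}_n(G)=\mathsf{P}(G)$ if $n$ is odd and $\mathsf{P}_n(G)=\mathsf{P}_\star(G)$ if $n$ is even. Define $G_0=0$ (the atomic game $[0]$) and $G_{n+1}=\mathsf{M}(\mathsf{P}_n(G_n))$. Then for every $n\ge 0$, the game $G_n$ is monotone.
   Context: Games over a poset $A$ of atoms are defined inductively: for each $a\in A$, $[a]$ is a game (atomic; often written simply $a$); whenever $L,R$ are non-empty sets of games, $\{L\mid R\}$ is a game (composite), with left options the elements of $L$ and right options the elements of $R$; $\{G_1,\dots,G_n\mid H_1,\dots,H_m\}$ denotes $\{\{G_1,\dots,G_n\}\mid\{H_1,\dots,H_m\}\}$. A position of $G$ is $G$ itself, an option of $G$, an option of an option, etc. Relations $\le$ and $\lhd$ on games are defined by mutual recursion: $G\le H$ iff (1) every left option $G^L$ of $G$ satisfies $G^L\lhd H$, (2) every right option $H^R$ of $H$ satisfies $G\lhd H^R$, and (3) if $G$ or $H$ is atomic then $G\lhd H$. $G\lhd H$ iff (1) some right option $G^R$ of $G$ satisfies $G^R\le H$, or (2) some left option $H^L$ of $H$ satisfies $G\le H^L$, or (3) $G=[a]$, $H=[b]$ are atomic with $a\le b$ in $A$. A game $G$ is locally monotone if every left option satisfies $G\le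 G^L$ and every right option satisfies $G^R\le G$; it is monotone if every position of $G$ is locally monotone. *)

(* Defs.v *)
From Stdlib Require Import List Arith.
Import ListNotations.
Set Implicit Arguments.

Inductive game (A : Type) : Type :=
| Atom : A -> game A
| Comp : list (game A) -> list (game A) -> game A.
Arguments Atom {A} _.
Arguments Comp {A} _ _.

Definition is_atom {A} (G : game A) : Prop :=
  match G with Atom _ => True | Comp _ _ => False end.

Definition left_opt {A} (G X : game A) : Prop :=
  match G with Atom _ => False | Comp L _ => In X L end.

Definition right_opt {A} (G X : game A) : Prop :=
  match G with Atom _ => False | Comp _ R => In X R end.

(* G <= H and G <| H, defined by mutual (well-founded) recursion;
   rendered as mutually inductive predicates (least fixpoint = the
   recursive definition, since each clause refers to smaller pairs). *)
Inductive gle {A} (leA : A -> A -> Prop) : game A -> game A -> Prop :=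
| gle_intro G H :
    (forall GL, left_opt G GL -> glt leA GL H) ->
    (forall HR, right_opt H HR -> glt leA G HR) ->
    (is_atom G \/ is_atom H -> glt leA G H) ->
    gle leA G H
with glt {A} (leA : A -> A -> Prop) : game A -> game A -> Prop :=
| glt_right G H GR : right_opt G GR -> gle leA GR H -> glt leA G H
| glt_left G H HL : left_opt H HL -> gle leA G HL -> glt leA G H
| glt_atom a b : leA a b -> glt leA (Atom a) (Atom b).

Inductive position {A} : game A -> game A -> Prop :=
| pos_self G : position G G
| pos_left G X P : left_opt G X -> position X P -> position G P
| pos_right G X P : right_opt G X -> position X P -> position G P.

Definition locally_monotone {A} (leA : A -> A -> Prop) (G : game A) : Prop :=
  (forall GL, left_opt G GL -> gle leA G GL) /\
  (forall GR, right_opt G GR -> gle leA GR G).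

Definition monotone {A} (leA : A -> A -> Prop) (G : game A) : Prop :=
  forall P, position G P -> locally_monotone leA P.

Inductive L5 : Type := m3 | m2 | m1 | z0 | p1.

Definition L5_val (x : L5) : nat :=
  match x with m3 => 0 | m2 => 1 | m1 => 2 | z0 => 3 | p1 => 4 end.

Definition leL5 (x y : L5) : Prop := L5_val x <= L5_val y.

Definition star : game L5 := Comp [Atom m1] [Atom m3].
Definition gM (G : game L5) : game L5 := Comp [Atom p1] [G].
Definition gP (G : game L5) : game L5 := Comp [G] [Atom m2].
Definition gPstar (G : game L5) : game L5 := Comp [G] [star].
Definition gPn (n : nat) (G : game L5) : game L5 :=
  if Nat.odd n then gP G else gPstar G.

Fixpoint Gseq (n : nat) : game L5 :=
  match n with
  | 0 => Atom z0
  | S k => gM (gPn k (Gseq k))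
  end.

(* Main.v *)
Require Import Defs.
From Stdlib Require Import List Arith Lia.
Import ListNotations.

Notation LE := (gle leL5).
Notation LT := (glt leL5).

Lemma at_lt a b : L5_val a <= L5_val b -> LT (Atom a) (Atom b).
Proof. intro; apply glt_atom; exact H. Qed.

Lemma at_le a b : L5_val a <= L5_val b -> LE (Atom a) (Atom b).
Proof. intro; constructor; simpl; try tauto. intros; apply at_lt; auto. Qed.

Ltac opt := let X := fresh in let H := fresh in
  intros X H; simpl in H; repeat (destruct H as [<-|H]); try contradiction.

Lemma m3_le_star : LE (Atom m3) star.
Proof.
  constructor; simpl; try tauto.
  - opt. apply at_lt; simpl; lia.
  - intros _. eapply glt_left. simpl; left; reflexivity. apply at_le; simpl; lia.
Qed.

Lemma star_lt_star : LT star star.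
Proof. eapply glt_right. simpl; left; reflexivity. apply m3_le_star. Qed.

Lemma star_le_m1 : LE star (Atom m1).
Proof.
  constructor; simpl; try tauto.
  - opt. apply at_lt; simpl; lia.
  - intros _. eapply glt_right. simpl; left; reflexivity. apply at_le; simpl; lia.
Qed.

Lemma star_le_at a : 2 <= L5_val a -> LE star (Atom a).
Proof.
  intro; constructor; simpl; try tauto.
  - opt. apply at_lt; simpl; lia.
  - intros _. eapply glt_right. simpl; left; reflexivity. apply at_le; simpl; lia.
Qed.

Lemma gPn_cases k G : gPn k G = gP G \/ gPn k G = gPstar G.
Proof. unfold gPn; destruct (Nat.odd k); auto. Qed.

Lemma X_le_P j k G : LE (Atom m2) G -> LE (Atom m1) G ->
  (forall Y, right_opt (gPn j (Atom z0)) Y -> LE Y (gPn k G)).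
Proof.
  intros H2 H1 Y HY.
  destruct (gPn_cases j (Atom z0)) as [E|E]; rewrite E in HY; simpl in HY;
    destruct HY as [<-|[]].
  - constructor; simpl; try tauto.
    + destruct (gPn_cases k G) as [E'|E']; rewrite E'; simpl; intros HR [<-|[]].
      * apply at_lt; simpl; lia.
      * eapply glt_left. simpl; left; reflexivity. apply at_le; simpl; lia.
    + intros _. eapply glt_left.
      destruct (gPn_cases k G) as [E'|E']; rewrite E'; simpl; left; reflexivity.
      exact H2.
  - constructor; simpl; try tauto.
    + intros GL [<-|[]]. eapply glt_left.
      destruct (gPn_cases k G) as [E'|E']; rewrite E'; simpl; left; reflexivity.
      exact H1.
    + destruct (gPn_cases k G) as [E'|E']; rewrite E'; simpl; intros HR [<-|[]].
      * eapply glt_right. simpl; left; reflexivity. apply at_le; simpl; lia.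
      * apply star_lt_star.
    + intros [Ha|Ha]; [contradiction|]. unfold gPn in Ha; destruct (Nat.odd k); contradiction.
Qed.

Lemma right_gPn k G Y : right_opt (gPn k G) Y -> Y = Atom m2 \/ Y = star.
Proof.
  destruct (gPn_cases k G) as [E|E]; rewrite E; simpl; intros [<-|[]]; auto.
Qed.

Lemma right_gPn' k G Y : right_opt (gPn k G) Y -> exists j, right_opt (gPn j (Atom z0)) Y.
Proof.
  intro H; destruct (right_gPn _ _ _ H) as [->| ->].
  - exists 1. simpl. auto.
  - exists 0. simpl. auto.
Qed.

Lemma X_le_P' k k' G G' Y : LE (Atom m2) G -> LE (Atom m1) G ->
  right_opt (gPn k' G') Y -> LE Y (gPn k G).
Proof.
  intros H2 H1 HY. destruct (right_gPn' _ _ _ HY) as [j Hj].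
  exact (X_le_P j k _ H2 H1 Y Hj).
Qed.

Lemma left_gPn k G X : left_opt (gPn k G) X -> X = G.
Proof.
  destruct (gPn_cases k G) as [E|E]; rewrite E; simpl; intros [<-|[]]; auto.
Qed.

Lemma P_lt_self k G : LE (Atom m2) G -> LE (Atom m1) G -> LT (gPn k G) (gPn k G).
Proof.
  intros. destruct (gPn_cases k G) as [E|E]; rewrite E.
  - eapply glt_right. simpl; left; reflexivity.
    rewrite <- E. eapply X_le_P'; eauto. rewrite E; simpl; auto.
  - eapply glt_right. simpl; left; reflexivity.
    rewrite <- E. eapply X_le_P'; eauto. rewrite E; simpl; auto.
Qed.

Lemma pos_inv (G P : game L5) : position G P ->
  P = G \/ exists X, (left_opt G X \/ right_opt G X) /\ position X P.
Proof. intro H; inversion H; subst; eauto. Qed.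
Arguments pos_inv {G P}.

Lemma mono_atom a : monotone leL5 (Atom a).
Proof.
  intros P HP. destruct (pos_inv HP) as [->|[X [Hx _]]].
  split; simpl; tauto. simpl in Hx; tauto.
Qed.

Lemma mono_star : monotone leL5 star.
Proof.
  intros P HP. destruct (pos_inv HP) as [->|[X [[[<-|[]]|[<-|[]]] HX] ] ].
  - split; opt. apply star_le_m1. apply m3_le_star.
  - apply (mono_atom _ _ HX).
  - apply (mono_atom _ _ HX).
Qed.

Lemma mono_comp L R : locally_monotone leL5 (Comp L R) ->
  (forall X, In X L -> monotone leL5 X) -> (forall X, In X R -> monotone leL5 X) ->
  monotone leL5 (Comp L R).
Proof.
  intros H HL HR P HP. destruct (pos_inv HP) as [->|[X [[Hx|Hx] HX] ] ]; auto.
  - exact (HL X Hx P HX).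
  - exact (HR X Hx P HX).
Qed.

Record Inv (G : game L5) : Prop := {
  i2 : LE (Atom m2) G;
  i1 : LE (Atom m1) G;
  ilt1 : LT G (Atom p1);
  ile1 : LE G (Atom p1);
  iself : LT G G;
  iP : forall k, LE (gPn k G) G;
  imono : monotone leL5 G }.

Lemma P_le_1 k G : LT G (Atom p1) -> LE (gPn k G) (Atom p1).
Proof.
  intro H. constructor.
  - intros GL HG. rewrite (left_gPn _ _ _ HG). exact H.
  - simpl; tauto.
  - intros _. destruct (gPn_cases k G) as [E|E]; rewrite E; eapply glt_right;
      try (simpl; left; reflexivity).
    + apply at_le; simpl; lia.
    + apply star_le_at; simpl; lia.
Qed.

Lemma Inv0 : Inv (Atom z0).
Proof.
  constructor.
  - apply at_le; simpl; lia.
  - apply at_le; simpl; lia.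
  - apply at_lt; simpl; lia.
  - apply at_le; simpl; lia.
  - apply at_lt; simpl; lia.
  - intro k. constructor.
    + intros GL HG. rewrite (left_gPn _ _ _ HG). apply at_lt; simpl; lia.
    + simpl; tauto.
    + intros _. destruct (gPn_cases k (Atom z0)) as [E|E]; rewrite E; eapply glt_right;
        try (simpl; left; reflexivity).
      * apply at_le; simpl; lia.
      * apply star_le_at; simpl; lia.
  - apply mono_atom.
Qed.

Lemma a_le_M a k G : L5_val a <= 4 -> LE (Atom a) G -> LE (Atom a) (gM (gPn k G)).
Proof.
  intros Ha H. constructor.
  - simpl; tauto.
  - simpl. intros HR [<-|[]]. eapply glt_left.
    destruct (gPn_cases k G) as [E|E]; rewrite E; simpl; left; reflexivity. exact H.
  - intros _. eapply glt_left. simpl; left; reflexivity. apply at_le; simpl; lia.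
Qed.

Lemma ex_right k H : exists Y, right_opt (gPn k H) Y.
Proof. destruct (gPn_cases k H) as [E|E]; rewrite E; simpl; eauto. Qed.

Lemma InvS k G : Inv G -> Inv (gM (gPn k G)).
Proof.
  intros [H2 H1 Hlt1 Hle1 Hself HP Hmono].
  assert (HP1 : LE (gPn k G) (Atom p1)) by (apply P_le_1; auto).
  assert (Hlt : LT (gM (gPn k G)) (Atom p1)).
  { eapply glt_right. simpl; left; reflexivity. exact HP1. }
  assert (Hle : LE (gM (gPn k G)) (Atom p1)).
  { constructor; simpl; try tauto. intros GL [<-|[]]. apply at_lt; simpl; lia. }
  assert (Hs : LT (gM (gPn k G)) (gM (gPn k G))).
  { eapply glt_left. simpl; left; reflexivity. exact Hle. }
  constructor; auto.
  - apply a_le_M; simpl; auto.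
  - apply a_le_M; simpl; auto.
  - intro k'. constructor.
    + intros GL HG. rewrite (left_gPn _ _ _ HG). exact Hs.
    + simpl. intros HR [<-|[]].
      destruct (ex_right k' (gM (gPn k G))) as [Y HY].
      eapply glt_right. exact HY. eapply X_le_P'; eauto.
    + intros [Ha|Ha]; [unfold gPn in Ha; destruct (Nat.odd k'); contradiction | contradiction].
  - apply mono_comp.
    + split.
      * simpl; intros GL [<-|[]]. exact Hle.
      * simpl; intros GR [<-|[]]. constructor.
        -- intros GL HG. rewrite (left_gPn _ _ _ HG). eapply glt_left.
           simpl; left; reflexivity. exact Hle1.
        -- simpl; intros HR [<-|[]]. apply P_lt_self; auto.
        -- intros [Ha|Ha]; simpl in Ha; try contradiction.
           destruct (gPn_cases k G) as [E|E]; rewrite E in Ha; contradiction.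
    + simpl; intros X [<-|[]]. apply mono_atom.
    + simpl; intros X [<-|[]].
      destruct (gPn_cases k G) as [E|E]; rewrite E; apply mono_comp.
      * split; simpl; intros Z [<-|[]].
        { pose proof (HP k) as HPk; rewrite E in HPk; exact HPk. }
        { assert (Hx := X_le_P' k k G G (Atom m2) H2 H1); rewrite E in Hx; apply Hx; simpl; auto. }
      * simpl; intros X [<-|[]]; auto.
      * simpl; intros X [<-|[]]; apply mono_atom.
      * split; simpl; intros Z [<-|[]].
        { pose proof (HP k) as HPk; rewrite E in HPk; exact HPk. }
        { assert (Hx := X_le_P' k k G G star H2 H1); rewrite E in Hx; apply Hx; simpl; auto. }
      * simpl; intros X [<-|[]]; auto.
      * simpl; intros X [<-|[]]; apply mono_star.
Qed.

Theorem lemma3p1 : forall n : nat, monotone leL5 (Gseq n).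
Proof.
  intro n. assert (Inv (Gseq n)) as [_ _ _ _ _ _ M]; [|exact M].
  induction n; simpl. apply Inv0. apply InvS; auto.
Qed.
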